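(* Let $n=4k+2$ for some integer $k\geq 0$, and let $v\in\mathbb{Z}^n$. If $v$ is contained in an $n$-icube in $\mathbb{Z}^n$, then $|v|^2=v^Tv\in\mathbb{Z}$ is a sum of two squares of integers.
   Context: For $1\leq k\leq n$, a matrix $(v_1|\dotsc|v_k)\in\mathbb{Z}^{n\times k}$ is a $k$-icube in $\mathbb{Z}^n$ of norm $\lambda>0$ if $v_i^Tv_j=\lambda$ for $i=j$ and $v_i^Tv_j=0$ for $i\neq j$. A vector $v$ is ''contained in'' an $n$-icube if it is one of the columns of some $n$-icube. *)

(* Defs.v *)
From mathcomp Require Import all_boot all_order all_algebra.
Set Implicit Arguments. Unset Strict Implicit. Unset Printing Implicit Defensive.
Import Order.TTheory GRing.Theory Num.Theory.
Local Open Scope ring_scope.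

Definition icube (n k : nat) (lam : int) (M : 'M[int]_(n, k)) : Prop :=
  0 < lam /\ forall i j : 'I_k, (M^T *m M) i j = (if i == j then lam else 0).

Definition in_icube (n : nat) (v : 'cV[int]_n) : Prop :=
  exists (lam : int) (M : 'M[int]_(n, n)) (j : 'I_n), icube lam M /\ col j M = v.

(* Main.v *)
Require Import Defs.
From mathcomp Require Import all_boot all_order all_algebra.
From mathcomp Require Import all_boot all_order all_algebra all_field.
From mathcomp Require Import cyclic zify ring lra.
Import Order.TTheory GRing.Theory Num.Theory.
Set Implicit Arguments. Unset Strict Implicit. Unset Printing Implicit Defensive.
Local Open Scope ring_scope.

Lemma det_swap (R : comNzRingType) m :
  \det (block_mx 0 1%:M 1%:M 0 : 'M[R]_(m+m)) = (-1)^+m.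
Proof.
have -> : (block_mx 0 1%:M 1%:M 0 : 'M[R]_(m+m)) =
  block_mx 1%:M 1%:M 0 1%:M *m block_mx 1%:M 0 (-1%:M) 1%:M *m
  block_mx 1%:M 1%:M 0 1%:M *m block_mx (-1%:M) 0 0 1%:M.
  rewrite !mulmx_block !(mulmx1, mul1mx, mulmx0, mul0mx, addr0, add0r, mulNmx, mulmxN).
  by rewrite subrr oppr0 add0r opprK addNr.
rewrite !det_mulmx !det_ublock det_lblock.
have -> : - 1%:M = (-1)%:M :> 'M[R]_m by apply/matrixP=> i j; rewrite !mxE mulNrn.
by rewrite !det1 det_scalar !mul1r !mulr1.
Qed.

Lemma det_anti1 (R : comNzRingType) m (X Y Z : 'M[R]_m) :
  \det (block_mx 0 X Z Y) = (-1)^+m * \det X * \det Z.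
Proof.
have H : block_mx 0 X Z Y *m block_mx 0 1%:M 1%:M 0 = block_mx X 0 Y Z.
  by rewrite mulmx_block !(mulmx1, mul1mx, mulmx0, mul0mx, addr0, add0r).
have := congr1 determinant H; rewrite det_mulmx det_swap det_lblock => e.
by rewrite -mulrA -e mulrCA -exprD -signr_odd oddD addbb expr0 mulr1.
Qed.

Lemma det_anti2 (R : comNzRingType) m (X Y Z : 'M[R]_m) :
  \det (block_mx Y X Z 0) = (-1)^+m * \det X * \det Z.
Proof.
have H : block_mx Y X Z 0 *m block_mx 0 1%:M 1%:M 0 = block_mx X Y 0 Z.
  by rewrite mulmx_block !(mulmx1, mul1mx, mulmx0, mul0mx, addr0, add0r).
have := congr1 determinant H; rewrite det_mulmx det_swap det_ublock => e.
by rewrite -mulrA -e mulrCA -exprD -signr_odd oddD addbb expr0 mulr1.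
Qed.

Lemma partC (F : fieldType) m (P : 'M[F]_(m+m)) : odd m -> P \in unitmx ->
  (ulsubmx (P *m P^T) = 0 \/ drsubmx (P *m P^T) = 0) -> exists x : F, x^+2 = -1.
Proof.
move=> om uP H.
set G := P *m P^T.
have GT : G^T = G by rewrite /G trmx_mul trmxK.
have dl : dlsubmx G = (ursubmx G)^T by rewrite trmx_ursub GT.
have dG : \det G = \det P ^+ 2 by rewrite /G det_mulmx det_tr expr2.
have nP : \det P != 0 by rewrite -unitfE -unitmxE.
have [X [Z [hdet hZ]]] : exists X Z : 'M[F]_m, \det G = - (\det X * \det Z) /\ Z = X^T.
  case: H => H0; exists (ursubmx G), (dlsubmx G); split => //.
    by move: H0; rewrite -/G => H0; rewrite -{1}[G]submxK H0 det_anti1 -signr_odd om expr1 mulN1r mulNr.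
  by move: H0; rewrite -/G => H0; rewrite -{1}[G]submxK H0 det_anti2 -signr_odd om expr1 mulN1r mulNr.
rewrite hZ det_tr in hdet.
have nX : \det X != 0.
  apply: contra nP => /eqP X0; move: hdet; rewrite X0 mul0r oppr0 dG.
  by move/eqP; rewrite expf_eq0.
exists (\det P / \det X); rewrite expr_div_n -dG hdet.
by field.
Qed.

Lemma Fp_nat0 p n : prime p -> (n%:R : 'F_p) = 0 -> (p %| n)%N.
Proof.
move=> pp h; have := val_Fp_nat pp n; rewrite h /= => e.
by rewrite /dvdn -e.
Qed.

Lemma partD p (x : 'F_p) : prime p -> (p %% 4 = 3)%N -> x ^+ 2 = -1 -> False.
Proof.
move=> pp p3 hx.
have x0 : x != 0.
  apply/eqP => x0; move: hx; rewrite x0 expr0n /= => /eqP.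
  by rewrite eq_sym oppr_eq0 oner_eq0.
have := expf_card x; rewrite card_Fp // => e0.
have ep : (p %/ 4 * 4 + 3)%N = p by rewrite {2}(divn_eq p 4) p3.
have : x ^+ (p %/ 4 * 4 + 3) = x by rewrite ep.
rewrite exprD mulnC exprM.
have -> : (4 = 2 * 2)%N by [].
rewrite exprM hx sqrrN expr1n expr1n mul1r.
have -> : (3 = 2 + 1)%N by [].
rewrite exprD hx expr1 mulN1r => h.
have h2 : x * 2%:R = 0.
  by rewrite mulrS mulrDr mulr1 -{1}h addNr.
have : (2%:R : 'F_p) = 0.
  by apply/eqP; move: h2 => /eqP; rewrite mulf_eq0 (negPf x0).
move/(Fp_nat0 pp) => /dvdn_leq hp.
lia.
Qed.

Lemma natA p f (a b g l h : nat) : prime p -> (0 < l)%N -> logn p l = (f.*2 + 1)%N ->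
  ~~ (p ^ f.+1 %| a)%N -> ~~ (p ^ f.+1 %| b)%N -> (a * g * b = l * h)%N -> (p %| g)%N.
Proof.
move=> pp l0 el na nb e.
have [->|g0] := posnP g; first exact: dvdn0.
have a0 : (0 < a)%N by case: a na {e} => //; rewrite dvdn0.
have b0 : (0 < b)%N by case: b nb {e} => //; rewrite dvdn0.
have h0 : (0 < h)%N.
  case: h e => // e; have : (0 < a * g * b)%N by rewrite !muln_gt0 a0 g0 b0.
  by rewrite e muln0.
rewrite pfactor_dvdn // -leqNgt in na.
rewrite pfactor_dvdn // -leqNgt in nb.
have := congr1 (logn p) e; rewrite !lognM ?muln_gt0 ?a0 ?g0 // el => e2.
suff : (p ^ 1 %| g)%N by rewrite expn1.
rewrite pfactor_dvdn //; lia.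
Qed.

Lemma natB p f (a b g l h : nat) : prime p -> (0 < l)%N -> logn p l = (f.*2 + 1)%N ->
  (p ^ f.+1 %| a)%N -> (p ^ f.+1 %| b)%N -> (a * g * b = l * h)%N -> (p %| h)%N.
Proof.
move=> pp l0 el na nb e.
have [->|h0] := posnP h; first exact: dvdn0.
have lh0 : (0 < l * h)%N by rewrite muln_gt0 l0.
have : (p ^ (f.+1 + f.+1) %| l * h)%N.
  by rewrite -e expnD mulnAC; apply: dvdn_mulr; exact: dvdn_mul.
move=> hd; move: (hd); rewrite (pfactor_dvdn _ pp lh0) (lognM _ l0 h0) el => e2.
suff : (p ^ 1 %| h)%N by rewrite expn1.
rewrite pfactor_dvdn //; lia.
Qed.

Lemma intA p f (a b g l h : int) : prime p -> l != 0 -> logn p `|l| = (f.*2 + 1)%N ->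
  ~~ ((p ^ f.+1)%:Z %| a)%Z -> ~~ ((p ^ f.+1)%:Z %| b)%Z -> a * g * b = l * h -> (p%:Z %| g)%Z.
Proof.
move=> pp l0 el na nb e; rewrite /dvdz !absz_nat in na nb *.
apply: (natA (b:=`|b|) (l:=`|l|) (h:=`|h|) pp _ el na nb); first by rewrite absz_gt0.
by rewrite -!abszM e.
Qed.

Lemma intB p f (a b g l h : int) : prime p -> l != 0 -> logn p `|l| = (f.*2 + 1)%N ->
  ((p ^ f.+1)%:Z %| a)%Z -> ((p ^ f.+1)%:Z %| b)%Z -> a * g * b = l * h -> (p%:Z %| h)%Z.
Proof.
move=> pp l0 el na nb e; rewrite /dvdz !absz_nat in na nb *.
apply: (natB (a:=`|a|) (b:=`|b|) (g:=`|g|) pp _ el na nb); first by rewrite absz_gt0.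
by rewrite -!abszM e.
Qed.

Lemma Fp0 p (z : int) : prime p -> (p%:Z %| z)%Z -> (z%:~R : 'F_p) = 0.
Proof.
move=> pp /dvdzP [c ->]; rewrite intrM.
have -> : ((p%:Z)%:~R : 'F_p) = p%:R by [].
by rewrite pchar_Fp_0 // mulr0.
Qed.

Lemma partB m (M : 'M[int]_(m+m)) (lam : int) p : odd m -> 0 < lam ->
  M^T *m M = lam%:M -> prime p -> (p %% 4 = 3)%N -> ~~ odd (logn p `|lam|).
Proof.
move=> om lam0 hM pp p3; apply/negP => oe.
have l0 : lam != 0 by rewrite gt_eqF.
set e := logn p `|lam| in oe.
have ef : e = ((e./2).*2 + 1)%N by rewrite -{1}(odd_double_half e) oe addnC.
set f := e./2 in ef.
have [L uL [R uR [d sd hMd]]] := int_Smith_normal_form M.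
set D := \matrix_(i, j) (d`_i *+ (i == j :> nat)) in hMd.
have hD : D = diag_mx (\row_i d`_i) by apply/matrixP => i j; rewrite !mxE.
set Q := invmx R.
have hRQ : R *m Q = 1%:M by rewrite mulmxV.
set G := L^T *m L. set H := Q^T *m Q.
have key : D *m G *m D = lam *: H.
  have := congr1 (fun X => Q^T *m X *m Q) hM.
  rewrite /= hMd !trmx_mul !mulmxA -trmx_mul hRQ trmx1 mul1mx.
  rewrite hD tr_diag_mx -!mulmxA hRQ mulmx1 => ->.
  by rewrite mul_scalar_mx scalemxAr.
have keyij : forall i j : 'I_(m+m), d`_i * G i j * d`_j = lam * H i j.
  move=> i j; have := congr1 (fun X : 'M[int]_(m+m) => X i j) key; rewrite /= hD.
  by rewrite mul_mx_diag mul_diag_mx !mxE.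
have hdiv : forall i j : nat, (i <= j)%N -> (d`_i %| d`_j)%Z.
  move=> i j ij; have [jd|jd] := ltnP j (size d).
    apply: (sorted_leq_nth dvdz_trans dvdzz) => //.
    by rewrite inE (leq_ltn_trans ij jd).
  by rewrite nth_default // dvdz0.
set q := (p ^ f.+1)%:Z.
have umap : forall A : 'M[int]_(m+m), A \in unitmx -> map_mx (intr : int -> 'F_p) A \in unitmx.
  move=> A uA; have := congr1 (map_mx (intr : int -> 'F_p)) (mulmxV uA).
  by rewrite map_mxM map_mx1 => /mulmx1_unit [].
have [qd|qd] := boolP (q %| d`_(m.-1))%Z.
  set P := map_mx (intr : int -> 'F_p) Q^T.
  have uP : P \in unitmx by rewrite umap // unitmx_tr unitmx_inv.
  have [x hx] : exists x : 'F_p, x ^+ 2 = -1.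
    apply: (partC om uP); right.
    rewrite /P map_trmx trmxK -map_mxM -/H.
    apply/matrixP => i j.
    have -> : drsubmx (map_mx (intr : int -> 'F_p) H) i j = (H (rshift m i) (rshift m j))%:~R by rewrite !mxE.
    rewrite [RHS]mxE; apply: Fp0 => //.
    have hq : forall k : 'I_m, (q %| d`_(rshift m k))%Z.
      move=> k; apply: (dvdz_trans qd); apply: hdiv => /=.
      lia.
    exact: (intB pp l0 ef (hq i) (hq j) (keyij _ _)).
  exact: (partD pp p3 hx).
set P := map_mx (intr : int -> 'F_p) L^T.
have uP : P \in unitmx by rewrite umap // unitmx_tr.
have [x hx] : exists x : 'F_p, x ^+ 2 = -1.
  apply: (partC om uP); left.
  rewrite /P map_trmx trmxK -map_mxM -/G.
  apply/matrixP => i j.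
  have -> : ulsubmx (map_mx (intr : int -> 'F_p) G) i j = (G (lshift m i) (lshift m j))%:~R by rewrite !mxE.
  rewrite [RHS]mxE; apply: Fp0 => //.
  have hq : forall k : 'I_m, ~~ (q %| d`_(lshift m k))%Z.
    move=> k; apply: contra qd => h; apply: (dvdz_trans h); apply: hdiv => /=.
    have := ltn_ord k; lia.
  exact: (intA pp l0 ef (hq i) (hq j) (keyij _ _)).
exact: (partD pp p3 hx).
Qed.

Lemma sqrtN1 p : prime p -> (p %% 4 = 1)%N -> exists x : nat, (p %| x ^ 2 + 1)%N.
Proof.
move=> pp p1.
have p0 := prime_gt0 pp.
have ep : p = (4 * (p %/ 4)).+1 by rewrite {1}(divn_eq p 4) p1 addn1 mulnC.
set t := (p %/ 4)%N in ep.
set rs := enum [pred y : 'F_p | y != 0].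
have srs : size rs = p.-1.
  by rewrite -cardE cardC1 card_Fp.
have urs : all (p.-1).-unity_root rs.
  apply/allP => y; rewrite mem_enum inE => y0.
  rewrite unity_rootE; apply/eqP.
  have := expf_card y; rewrite card_Fp // => ey.
  have : y ^+ (p.-1).+1 = y by rewrite prednK.
  rewrite exprSr => h; apply: (mulIf y0); by rewrite mul1r.
have t0 : (0 < t)%N by have := prime_gt1 pp; lia.
have pm1 : p.-1 = (4 * t)%N by lia.
have : has (p.-1).-primitive_root rs.
  apply: has_prim_root => //; [lia | exact: enum_uniq | by rewrite srs].
rewrite pm1 => /hasP [z _ pz].
have z4 : z ^+ (4 * t) = 1 by apply: prim_expr_order.
have : (z ^+ (2 * t)) ^+ 2 == 1 by rewrite -exprM mulnC mulnA z4.
rewrite sqrf_eq1 => /orP [z1|zN1].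
  have := prim_order_dvd pz (2 * t); rewrite z1.
  move=> h; have := dvdn_leq _ h; rewrite muln_gt0 t0 => /(_ isT); lia.
exists (val (z ^+ t)); apply: (Fp_nat0 pp).
rewrite natrD natrX natr_Zp -exprM mulnC (eqP zN1).
by rewrite addNr.
Qed.

Lemma fermat2 p : prime p -> (p %% 4 = 1)%N -> exists a b : int, p%:Z = a ^+ 2 + b ^+ 2.
Proof.
move=> pp p1; have [x hx] := sqrtN1 pp p1.
have p1' := prime_gt1 pp.
have exc : exists c, (p < c * c)%N by exists p; nia.
case: (ex_minnP exc) => c pc cmin.
have c0 : (0 < c)%N by case: c pc {cmin} => //; rewrite muln0.
have ss1 : (c.-1 * c.-1 <= p)%N.
  by rewrite leqNgt; apply/negP => h; have := cmin _ h; lia.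
have ss2 : (c.-1 * c.-1 != p)%N.
  apply/eqP => e; case/primeP: (pp) => _ hp.
  have := hp c.-1; rewrite -{1}e dvdn_mulr // => /(_ isT) /orP[/eqP e1|/eqP e1].
    by move: e; rewrite e1; lia.
  by move: e; rewrite e1; nia.
have ss : (c.-1 * c.-1 < p)%N by rewrite ltn_neqAle ss1 ss2.
pose g := fun ab : 'I_c * 'I_c => (Ordinal (ltn_pmod (ab.1 + x * ab.2) (prime_gt0 pp)) : 'I_p).
have ninj : ~~ injectiveb g.
  by apply/negP => /injectiveP /leq_card; rewrite card_prod !card_ord; lia.
case/injectivePn: ninj => [[a1 b1]] [[a2 b2]] hne hg.
have hm : ((a1 + x * b1) %% p = (a2 + x * b2) %% p)%N by move: hg => /(congr1 val).
have ha1 := ltn_ord a1; have ha2 := ltn_ord a2; have hb1 := ltn_ord b1; have hb2 := ltn_ord b2.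
move: hne; rewrite xpair_eqE negb_and => hne.
have hne' : (nat_of_ord a1 != nat_of_ord a2) || (nat_of_ord b1 != nat_of_ord b2) by [].
move: (nat_of_ord a1) (nat_of_ord a2) (nat_of_ord b1) (nat_of_ord b2) ha1 ha2 hb1 hb2 hm hne' => {g hg hne} a1' a2' b1' b2' ha1 ha2 hb1 hb2 hm hne.
set U : int := a1'%:Z - a2'%:Z.
set V : int := b1'%:Z - b2'%:Z.
have [w hw] : exists w : int, U + x%:Z * V = w * p%:Z.
  exists (((a1' + x*b1') %/ p)%N%:Z - ((a2' + x*b2') %/ p)%N%:Z).
  have e1 := divn_eq (a1' + x*b1') p; have e2 := divn_eq (a2' + x*b2') p.
  rewrite hm in e1.
  set q1 := ((a1' + x*b1') %/ p)%N in e1 *.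
  set q2 := ((a2' + x*b2') %/ p)%N in e2 *.
  set r := ((a2' + x*b2') %% p)%N in e1 e2.
  clearbody q1 q2 r; clear hm.
  rewrite /U /V; lia.
case/dvdnP: hx => k hk.
exists U, V.
have hN : U ^+ 2 + V ^+ 2 = (w * (U - x%:Z * V) + V ^+ 2 * k%:Z) * p%:Z.
  have hk' : x%:Z * x%:Z + 1 = k%:Z * p%:Z by rewrite expnS expn1 in hk; lia.
  rewrite mulrDl -mulrA (mulrC _ p%:Z) mulrA -hw -mulrA -hk'; ring.
set s := c.-1 in ss.
have sc : (c = s.+1)%N by rewrite /s prednK.
clearbody s; subst c.
have bU : U ^+ 2 <= (s * s)%N%:Z.
  have h : 0 <= (s%:Z - a1'%:Z + a2'%:Z) * (s%:Z + a1'%:Z - a2'%:Z) by apply: mulr_ge0; lia.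
  rewrite /U expr2; lia.
have bV : V ^+ 2 <= (s * s)%N%:Z.
  have h : 0 <= (s%:Z - b1'%:Z + b2'%:Z) * (s%:Z + b1'%:Z - b2'%:Z) by apply: mulr_ge0; lia.
  rewrite /V expr2; lia.
have pos : 0 < U ^+ 2 + V ^+ 2.
  have hU := sqr_ge0 U; have hV := sqr_ge0 V.
  case/orP: hne => hne.
    have U0 : U != 0 by rewrite /U subr_eq0 eqz_nat.
    have : 0 < U ^+ 2 by rewrite lt0r sqrf_eq0 U0 sqr_ge0.
    move: hU hV; set a := U ^+ 2; set b := V ^+ 2; lia.
  have V0 : V != 0 by rewrite /V subr_eq0 eqz_nat.
  have : 0 < V ^+ 2 by rewrite lt0r sqrf_eq0 V0 sqr_ge0.
  move: hU hV; set a := U ^+ 2; set b := V ^+ 2; lia.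
have lt2 : U ^+ 2 + V ^+ 2 < 2 * p%:Z.
  move: bU bV pos; set a := U ^+ 2; set b := V ^+ 2; lia.
rewrite hN in pos lt2 *.
set K := (w * (U - x%:Z * V) + V ^+ 2 * k%:Z) in pos lt2 *.
have hp0 : 0 < p%:Z by lia.
have : K = 1.
  clearbody K; move: pos lt2 hp0; clear; move: K (p%:Z) => K P.
  have [K0|K0] : K <= 0 \/ 1 <= K by lia.
    by move=> h; have := mulr_le0_ge0 K0 (ltW _); lia.
  have [K1|K1] : K <= 1 \/ 2 <= K by lia.
    lia.
  move=> _ h P0; have := ler_pM2r P0; have := ler_wpM2r (ltW P0) K1; lia.
by move=> ->; rewrite mul1r.
Qed.

Lemma twosq (n : nat) : (0 < n)%N ->
  (forall p, prime p -> (p %% 4 = 3)%N -> ~~ odd (logn p n)) ->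
  exists a b : int, n%:Z = a ^+ 2 + b ^+ 2.
Proof.
elim: n {-2}n (leqnn n) => [|N IH] n hn n0 hyp; first by move: n0; rewrite lt0n -leqn0 hn.
have [n1|n1] := leqP n 1.
  have -> : n = 1%N by lia.
  by exists 1, 0; rewrite expr0n /= addr0 expr1n.
set p := pdiv n.
have pp : prime p := pdiv_prime n1.
have pdn : (p %| n)%N := pdiv_dvd n.
have p1 := prime_gt1 pp.
have red : forall d n', (0 < d)%N -> (1 < d)%N -> n = (n' * d)%N ->
   (forall q, prime q -> (q %% 4 = 3)%N -> ~~ odd (logn q d)) ->
   exists a b : int, n'%:Z = a ^+ 2 + b ^+ 2.
  move=> d n' d0 d1 en hd.
  have n'0 : (0 < n')%N by move: n0; rewrite en muln_gt0 => /andP [].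
  apply: (IH n') => //.
    have : (n' < n)%N by rewrite en -{1}(muln1 n') ltn_mul2l n'0 d1.
    lia.
  move=> q pq q3; move: (hyp q pq q3); rewrite en lognM // oddD.
  by rewrite (negPf (hd q pq q3)) addbF.
have [p2|p2] := boolP (p %% 2 == 0)%N.
  have e2 : p = 2%N.
    by apply/eqP; rewrite eq_sym -dvdn_prime2 // /dvdn.
  have en : n = (n %/ 2 * 2)%N by rewrite divnK // -e2.
  have hd : forall q, prime q -> (q %% 4 = 3)%N -> ~~ odd (logn q 2).
    move=> q pq q3; rewrite (logn_prime _ (isT : prime 2)).
    by case: eqP => // e; rewrite e in q3.
  have [a [b hab]] := red 2%N _ isT isT en hd.
  exists (a + b), (a - b); rewrite en PoszM hab; ring.
have [p4|p4] : (p %% 4 = 1)%N \/ (p %% 4 = 3)%N by move: p2; lia.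
  have [c [e hce]] := fermat2 pp p4.
  have en : n = (n %/ p * p)%N by rewrite divnK.
  have hd : forall q, prime q -> (q %% 4 = 3)%N -> ~~ odd (logn q p).
    move=> q pq q3; rewrite (logn_prime _ pp).
    by case: eqP => // eq; rewrite eq p4 in q3.
  have [a [b hab]] := red p _ (prime_gt0 pp) p1 en hd.
  exists (a * c - b * e), (a * e + b * c); rewrite en PoszM hab hce; ring.
have l1 : (1 <= logn p n)%N by rewrite -pfactor_dvdn // expn1.
have l2 : (2 <= logn p n)%N.
  have := hyp p pp p4; move: l1; case: (logn p n) => [|[|]] //.
have pdn2 : (p ^ 2 %| n)%N by rewrite pfactor_dvdn.
have en : n = (n %/ p ^ 2 * p ^ 2)%N by rewrite divnK.
have hd : forall q, prime q -> (q %% 4 = 3)%N -> ~~ odd (logn q (p ^ 2)).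
  by move=> q pq q3; rewrite lognX oddM.
have p20 : (0 < p ^ 2)%N by rewrite expn_gt0 (prime_gt0 pp).
have p21 : (1 < p ^ 2)%N by rewrite (ltn_exp2l 0 2 p1).
have [a [b hab]] := red (p ^ 2)%N _ p20 p21 en hd.
exists (p%:Z * a), (p%:Z * b); rewrite en PoszM hab PoszM; ring.
Qed.

Theorem mainTheorem1 (k : nat) (v : 'cV[int]_(4 * k + 2)) :
  in_icube v ->
  exists a b : int, (v^T *m v) 0 0 = a ^+ 2 + b ^+ 2.
Proof.
case=> lam [M [j [[lam0 hM] hv]]].
have hMM : M^T *m M = lam%:M.
  by apply/matrixP => i i'; rewrite hM !mxE; case: (i == i').
have -> : (v^T *m v) 0 0 = lam.
  have := hM j j; rewrite eqxx => <-; rewrite -hv !mxE.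
  by apply: eq_bigr => i _; rewrite !mxE.
clear hv hM j v.
have e : (4 * k + 2 = (2 * k + 1) + (2 * k + 1))%N by lia.
move: M hMM; rewrite e => M hMM.
have om : odd (2 * k + 1) by rewrite addn1 /= oddM.
have hyp : forall p, prime p -> (p %% 4 = 3)%N -> ~~ odd (logn p `|lam|).
  by move=> p pp p3; exact: (partB om lam0 hMM pp p3).
have l0 : (0 < `|lam|)%N by rewrite absz_gt0 gt_eqF.
have [a [b hab]] := twosq l0 hyp.
exists a, b; rewrite -hab abszE gtr0_norm //.
Qed.
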